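(* Let $d \ge 1$ be an integer and $p$ a prime number. Choose the coefficient vector $(a_0, a_1, \ldots, a_d)$ uniformly at random in $(\mathbb{Z}/p\mathbb{Z})^{d+1}$ (each of the $p^{d+1}$ vectors with probability $p^{-(d+1)}$), and let $P(x) = a_0x^d + a_1x^{d-1} + \cdots + a_{d-1}x + a_d$. Then the probability that $p$ is not a periodic prime divisor of $P$, i.e. that $P(m) \not\equiv 0 \pmod p$ for every $m \in \mathbb{Z}$, equals $$D_d(p) = \left(1-\frac1p\right)\sum_{k=0}^{\min(d,p-1)} (-1)^k \binom{p-1}{k} p^{-k}.$$ In particular, if $p \le d+1$, then $D_d(p) = \left(1-\frac1p\right)^p$.
   Context: A prime $p$ is called a periodic prime divisor (d.p.p.) of an integer-valued polynomial $P$ if for every $m \in \mathbb{Z}$, $p$ divides at least one of $P(m), P(m+1), \ldots, P(m+p-1)$; for a polynomial with integer coefficients this holds if and only if there exists $m \in \mathbb{Z}$ with $p \mid P(m)$. The polynomials considered have integer coefficients and the random model is the uniform distribution of the coefficients modulo $p$ (leading coefficient allowed to be $0$ mod $p$). *)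

(* Defs.v *)
From HB Require Import structures.
From mathcomp Require Import all_boot all_order all_algebra.
From mathcomp Require Import boolp.
Set Implicit Arguments. Unset Strict Implicit. Unset Printing Implicit Defensive.
Import Order.TTheory GRing.Theory Num.Theory.
Local Open Scope ring_scope.

(* Coefficient vector (a_0,...,a_d) with a_i in Z/pZ, represented by its
   canonical residues 0..p-1 (elements of 'I_p). *)
Definition coeffs (d p : nat) := {ffun 'I_d.+1 -> 'I_p}.

Definition evalP (d p : nat) (a : coeffs d p) (m : int) : int :=
  \sum_(i < d.+1) ((a i : nat)%:Z) * m ^+ (d - i)%N.

Definition not_dpp (d p : nat) (a : coeffs d p) : Prop :=
  forall m : int, ~ ((p%:Z %| evalP a m)%Z).

Definition prob_not_dpp (d p : nat) : rat :=
  (#|[set a : coeffs d p | `[< not_dpp a >]]|)%:R / (p ^ d.+1)%:R.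

Definition D (d p : nat) : rat :=
  (1 - (p%:R)^-1) *
  \sum_(k < (minn d p.-1).+1) (-1) ^+ k * ('C(p.-1, k))%:R / (p%:R) ^+ k.

(* Main.v *)
Require Import Defs.
From HB Require Import structures.
From mathcomp Require Import all_boot all_order all_algebra.
From mathcomp Require Import boolp.
From mathcomp Require Import ring lra.
Set Implicit Arguments. Unset Strict Implicit. Unset Printing Implicit Defensive.
Import Order.TTheory GRing.Theory Num.Theory.
Local Open Scope ring_scope.

Section Count.
Variable F : finFieldType.

Definition fe n (f : {ffun 'I_n -> F}) (i : nat) : F := odflt 0 (omap f (insub i)).
Definition pf n (f : {ffun 'I_n -> F}) : {poly F} := \poly_(i < n) fe f i.
Definition good (S : {set F}) (P : {poly F}) :=
  (P.[0] != 0) && [forall s in S, P.[s] != 0].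
Definition cnt n S := #|[set f : {ffun 'I_n -> F} | good S (pf f)]|.

Lemma pf_coef n (f : {ffun 'I_n -> F}) (i : 'I_n) : (pf f)`_i = f i.
Proof. by rewrite /pf coef_poly ltn_ord /fe valK. Qed.

Lemma pf_inj n : injective (@pf n).
Proof.
move=> f g e; apply/ffunP => i; by rewrite -!pf_coef e.
Qed.

Lemma poly_sizeK n (P : {poly F}) : (size P <= n)%N -> \poly_(i < n) P`_i = P.
Proof.
move=> hs; apply/polyP => j; rewrite coef_poly.
case: ltnP => // hj; rewrite nth_default //; exact: leq_trans hs hj.
Qed.

Lemma pf_of n (P : {poly F}) : (size P <= n)%N ->
  pf [ffun i : 'I_n => P`_i] = P.
Proof.
move=> hs; rewrite -{2}(poly_sizeK hs); apply/polyP => j.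
rewrite !coef_poly; case: ltnP => // hj.
by rewrite /fe insubT /= ffunE.
Qed.

Lemma pf0 n (f : {ffun 'I_n.+1 -> F}) : (pf f).[0] = f ord0.
Proof. by rewrite horner_coef0 (pf_coef f ord0). Qed.

Lemma foldr_const (T : Type) (s : seq T) k : foldr muln 1%N [seq k | _ <- s] = (k ^ size s)%N.
Proof. by elim: s => //= x s ->; rewrite expnS. Qed.

Lemma card_nz n :
  #|[set f : {ffun 'I_n.+1 -> F} | f ord0 != 0]| = (#|F|.-1 * #|F| ^ n)%N.
Proof.
pose FF := fun i : 'I_n.+1 => if i == ord0 then (predC1 (0:F)) else (@predT F).
have -> : [set f : {ffun 'I_n.+1 -> F} | f ord0 != 0] = [set f | f \in family FF].
  apply/setP => f; rewrite !inE; apply/idP/familyP.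
    by move=> h x; rewrite /FF; case: eqP => [->|] //; rewrite inE.
  by move=> /(_ ord0); rewrite /FF eqxx inE.
rewrite cardsE card_family.
rewrite /image_mem -/(enum _) enum_ordSl /=.
rewrite -map_comp (@eq_map _ _ _ (fun _ => #|F|)); last first.
  by move=> i /=; rewrite /FF; apply: eq_card.
rewrite (foldr_const (enum 'I_n) #|F|) size_enum_ord.
congr (_ * _)%N; rewrite -(cardC1 (0:F)); apply: eq_card => x; by rewrite !inE.
Qed.

Lemma fe_ord n (f : {ffun 'I_n -> F}) (i : 'I_n) : fe f i = f i.
Proof. by rewrite /fe valK. Qed.

Lemma cnt1 S : cnt 1 S = #|F|.-1.
Proof.
rewrite /cnt; have -> : [set f : {ffun 'I_1 -> F} | good S (pf f)] = [set f : {ffun 'I_1 -> F} | f ord0 != 0].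
  apply/setP => f; rewrite !inE /good.
  have hx x : (pf f).[x] = f ord0 by rewrite /pf horner_poly big_ord1 fe_ord expr0 mulr1.
  rewrite hx; case h: (f ord0 != 0) => //=; apply/forallP => s; by rewrite hx h implybT.
by rewrite (card_nz 0) expn0 muln1.
Qed.

Lemma cnt0 n : cnt n.+1 set0 = (#|F|.-1 * #|F| ^ n)%N.
Proof.
rewrite -card_nz /cnt; apply: eq_card => f; rewrite !inE /good pf0.
case: (f ord0 != 0) => //=; apply/forallP => s; by rewrite inE.
Qed.

Lemma good_U t S P : good (t |: S) P = good S P && (P.[t] != 0).
Proof.
rewrite /good; case: (P.[0] != 0) => //=.
apply/forallP/andP => [h|[/forallP h1 h2] s].
  split; last by move: (h t); rewrite setU11.
  by apply/forallP => s; apply/implyP => hs; move: (h s); rewrite in_setU1 hs orbT.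
rewrite in_setU1; apply/implyP => /orP [/eqP -> //|hs].
by move/implyP: (h1 s); apply.
Qed.

Lemma cntS n (t : F) (S : {set F}) : t != 0 -> t \notin S ->
  (cnt n.+2 (t |: S) + cnt n.+1 S)%N = cnt n.+2 S.
Proof.
move=> t0 tS.
pose A := [set f : {ffun 'I_n.+2 -> F} | good S (pf f)].
pose B := [set f : {ffun 'I_n.+2 -> F} | good S (pf f) && ((pf f).[t] == 0)].
pose phi := fun g : {ffun 'I_n.+1 -> F} => [ffun i : 'I_n.+2 => (('X - t%:P) * pf g)`_i].
have pphi g : pf (phi g) = ('X - t%:P) * pf g.
  apply: pf_of; apply: leq_trans (size_polyMleq _ _) _.
  by rewrite size_XsubC /=; apply: size_poly.
have phiI : injective phi.
  move=> g h e; apply: pf_inj; have nz : 'X - t%:P != 0 by rewrite polyXsubC_eq0.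
  apply: (mulfI nz).
  by rewrite -!pphi e.
have eB : B = phi @: [set g | good S (pf g)].
  apply/setP => f; rewrite inE; apply/andP/imsetP.
  - case => hg ht.
    have /factor_theorem [q eq] : root (pf f) t by [].
    have g0 := hg; move: g0; rewrite /good => /andP [h0 /forallP hs].
    have nzq : q != 0 by apply: contraNneq h0 => q0; rewrite eq q0 mul0r horner0.
    have hq : (size q <= n.+1)%N.
      have := size_poly n.+2 (fe f); rewrite -/(pf f) eq size_Mmonic ?monicXsubC //.
      by rewrite size_XsubC addn2.
    exists [ffun i : 'I_n.+1 => q`_i].
      rewrite inE pf_of // /good; apply/andP; split.
        by move: h0; rewrite eq hornerM; apply: contraNneq => ->; rewrite mul0r.
      apply/forallP => s; apply/implyP => sS; move: (hs s); rewrite sS /= eq hornerM.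
      by apply: contraNneq => ->; rewrite mul0r.
    by apply: pf_inj; rewrite pphi pf_of // eq mulrC.
  - case => g; rewrite inE => hg ->; rewrite pphi; split; last first.
      by rewrite hornerM hornerXsubC subrr mul0r.
    move: hg; rewrite /good => /andP [h0 /forallP hs]; apply/andP; split.
      by rewrite hornerM hornerXsubC mulf_neq0 // sub0r oppr_eq0.
    apply/forallP => s; apply/implyP => sS; move: (hs s); rewrite sS /= => hs'.
    rewrite hornerM hornerXsubC mulf_neq0 // subr_eq0; apply: contraNneq tS => <-.
    exact: sS.
have eAB : [set f : {ffun 'I_n.+2 -> F} | good (t |: S) (pf f)] = A :\: B.
  apply/setP => f; rewrite !inE good_U.
  by case: (good S (pf f)); case: ((pf f).[t] == 0).
have BA : B \subset A by apply/subsetP => g; rewrite !inE => /andP [].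
rewrite (_ : cnt n.+1 S = #|B|); last by rewrite eB card_imset.
rewrite /cnt eAB -/A.
by rewrite -{2}(setIidPr BA) addnC cardsID.
Qed.


Definition ssum (Q : rat) n k :=
  \sum_(j < n.+1) (-1)^+j * ('C(k,j))%:R * Q^+(n-j).

Lemma ssum0 Q n : ssum Q n 0 = Q^+n.
Proof.
rewrite /ssum big_ord_recl big1 ?addr0 => [|i _]; first by rewrite expr0 bin0 subn0 !mul1r.
by rewrite bin0n /= mulr0 mul0r.
Qed.

Lemma ssumS Q m k : ssum Q m.+1 k.+1 = ssum Q m.+1 k - ssum Q m k.
Proof.
rewrite /ssum big_ord_recl [X in _ = X - _]big_ord_recl !bin0 !subn0 -addrA.
congr (_ + _).
rewrite -sumrN -big_split /=; apply: eq_bigr => j _.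
rewrite /bump /= add1n subSS binS natrD exprS.
rewrite mulrDr mulrDl; congr (_ + _); ring.
Qed.

Lemma cntG (k : nat) : forall (S : {set F}) n, #|S| = k -> 0 \notin S ->
  (cnt n.+1 S)%:R = (#|F|.-1)%:R * ssum #|F|%:R n k :> rat.
Proof.
elim: k => [|k IH] S n hS h0.
  move/eqP: hS; rewrite cards_eq0 => /eqP ->.
  by rewrite cnt0 ssum0 natrM natrX.
have : (0 < #|S|)%N by rewrite hS.
case/card_gt0P => t tS.
have t0 : t != 0 by apply: contraNneq h0 => <-.
have hS' : #|S :\ t| = k by have := cardsD1 t S; rewrite tS hS add1n => -[].
have tS' : t \notin S :\ t by rewrite setD11.
have h0' : 0 \notin S :\ t by rewrite inE negb_and h0 orbT.
have eS : S = t |: (S :\ t) by rewrite setD1K.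
case: n => [|m].
  by rewrite cnt1 /ssum big_ord1 expr0 bin0 subnn expr0 !mulr1.
rewrite ssumS mulrBr -(IH _ _ hS' h0') -(IH _ _ hS' h0').
by rewrite -(cntS m t0 tS') -eS natrD addrK.
Qed.

End Count.

Section Main.
Variables (d p : nat).
Hypothesis hp : prime p.

Definition psi (a : coeffs d p) : {ffun 'I_d.+1 -> 'F_p} :=
  [ffun j => ((a (rev_ord j)) : nat)%:R].

Lemma Fp_lt (x : 'F_p) : ((x : nat) < p)%N.
Proof. have h := ltn_ord x; move: (x : nat) h => n; by rewrite Fp_cast. Qed.

Lemma evalP_F (a : coeffs d p) (m : int) :
  ((evalP a m)%:~R : 'F_p) = (pf (psi a)).[m%:~R].
Proof.
rewrite /evalP rmorph_sum /pf horner_poly (reindex_inj rev_ord_inj) /=.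
apply: eq_bigr => j _; rewrite fe_ord ffunE rmorphM rmorphXn /=.
congr (_ * _ ^+ _); rewrite subSS subKn //; exact: (ltn_ord j).
Qed.

Lemma not_dppE (a : coeffs d p) :
  not_dpp a <-> forall x : 'F_p, (pf (psi a)).[x] != 0.
Proof.
split => h.
  move=> x; have := h (x : nat)%:Z; rewrite (dvdz_pcharf (pchar_Fp hp)) evalP_F.
  have -> : (((x : nat)%:Z)%:~R : 'F_p) = x by rewrite -[LHS]/((x:nat)%:R) natr_Zp.
  by move/negP.
move=> m; apply/negP; rewrite (dvdz_pcharf (pchar_Fp hp)) evalP_F; exact: h.
Qed.

Lemma psi_inj : injective psi.
Proof.
move=> a b e; apply/ffunP => i; have := congr1 (fun f : {ffun 'I_d.+1 -> 'F_p} => f (rev_ord i)) e.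
rewrite !ffunE rev_ordK => /(congr1 val) /=; rewrite !val_Fp_nat //.
by rewrite !modn_small //; move=> /val_inj.
Qed.

Lemma count_eq :
  #|[set a : coeffs d p | `[< not_dpp a >]]| = cnt d.+1 [set x : 'F_p | x != 0].
Proof.
rewrite /cnt -(card_imset _ psi_inj); apply: eq_card => f; rewrite !inE.
have gE (P : {poly 'F_p}) : good [set x | x != 0] P = [forall x, P.[x] != 0].
  rewrite /good; apply/andP/forallP => [[h0 /forallP h] x|h].
    by case: (eqVneq x 0) => [->//|nx]; move/implyP: (h x); rewrite inE; apply.
  by split => //; apply/forallP => x; apply/implyP => _.
rewrite gE; apply/imsetP/forallP => [[a]|h].
  by rewrite inE => /asboolP /not_dppE h ->.
pose a : coeffs d p := [ffun i => Ordinal (Fp_lt (f (rev_ord i)))].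
have ea : psi a = f by apply/ffunP => j; rewrite !ffunE rev_ordK /= natr_Zp.
exists a => //; rewrite inE; apply/asboolP/not_dppE; by rewrite ea.
Qed.

End Main.

Lemma sum_narrow (T : nat -> rat) n1 n2 : (n1 <= n2)%N ->
  (forall k, (n1 <= k)%N -> T k = 0) ->
  \sum_(k < n2) T k = \sum_(k < n1) T k.
Proof.
move=> h hT; rewrite (big_ord_widen n2 T h) [LHS](bigID (fun k : 'I_n2 => (k < n1)%N)) /=.
by rewrite [X in _ + X]big1 ?addr0 // => k; rewrite -leqNgt => /hT.
Qed.

Lemma sum_eqn n m (F : nat -> rat) : n = m -> \sum_(k < n) F k = \sum_(k < m) F k.
Proof. by move->. Qed.

Theorem proposition1 (d p : nat) (hd : (1 <= d)%N) (hp : prime p) :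
  prob_not_dpp d p = D d p /\
  ((p <= d.+1)%N -> D d p = (1 - (p%:R : rat)^-1) ^+ p).
Proof.
have p0 : (p%:R : rat) != 0 by rewrite pnatr_eq0 -lt0n prime_gt0.
have pS : p = p.-1.+1 by rewrite prednK // prime_gt0.
have p1 : (p.-1%:R : rat) = p%:R - 1 by rewrite {2}pS -addn1 natrD addrK.
pose T k := (-1) ^+ k * ('C(p.-1, k))%:R / (p%:R : rat) ^+ k.
have DE : D d p = (1 - (p%:R)^-1) * \sum_(k < d.+1) T k.
  rewrite /D; case: (leqP d p.-1) => h.
    by [].
  congr (_ * _); symmetry; apply: sum_narrow => [|k hk]; first exact: ltnW.
  by rewrite /T bin_small // mulr0 mul0r.
split.
  rewrite /prob_not_dpp count_eq // (@cntG _ p.-1 [set x : 'F_p | x != 0] d); first last.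
  - by rewrite inE eqxx.
  - rewrite (_ : [set x | x != 0] = [set~ 0]) ?cardsC1 ?(card_Fp hp) //.
    by apply/setP => x; rewrite !inE.
  rewrite (card_Fp hp) DE /ssum p1.
  have -> : \sum_(j < d.+1) (-1) ^+ j * ('C(p.-1, j))%:R * (p%:R : rat) ^+ (d - j)
       = (p%:R) ^+ d * \sum_(k < d.+1) T k.
    rewrite mulr_sumr; apply: eq_bigr => j _; rewrite /T.
    have hj : (j <= d)%N by rewrite -ltnS.
    have e : (p%:R : rat) ^+ d = p%:R ^+ (d - j) * p%:R ^+ j by rewrite -exprD subnK.
    rewrite e; field; by rewrite expf_neq0.
  rewrite natrX exprS; field; by rewrite p0 expf_neq0.
move=> hpd; have hm : (p.-1 <= d)%N by rewrite -ltnS -pS.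
rewrite /D; have -> : minn d p.-1 = p.-1 by apply/minn_idPr.
have -> : (1 - (p%:R : rat)^-1) ^+ p = (1 - p%:R^-1) * (1 - p%:R^-1) ^+ p.-1.
  by rewrite -exprS prednK // prime_gt0.
congr (_ * _).
rewrite exprDn; apply: eq_bigr => i _.
rewrite expr1n mul1r -[RHS]mulr_natr -[in RHS]mulN1r [in RHS]exprMn [in RHS]exprVn.
rewrite /T; field; by rewrite expf_neq0.
Qed.
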